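(* Consider a discounted Markov decision problem and the inexact policy mirror descent method as described in the context, with $\pi^{(0)}\in\operatorname{rint}\Pi$ and step sizes $\eta_k>0$, and suppose that the inexact $Q$-evaluations satisfy $\|\widehat Q(\pi^{(k)})-Q(\pi^{(k)})\|_\infty\le\tau$ for all $k\ge0$. Then for all $k\ge0$, \[ \bigl\langle\widehat Q_s(\pi^{(k)}),\pi^{(k+1)}_s-\pi^{(k)}_s\bigr\rangle\le0\qquad\forall s\in\mathcal{S}, \] and for any $\rho\in\Delta(\mathcal{S})$, \[ V_\rho(\pi^{(k+1)})-V_\rho(\pi^{(k)})\le\frac{2}{1-\gamma}\tau. \]
   Context: A discounted Markov decision problem (cost-minimization form): finite state set $\mathcal{S}$, finite action set $\mathcal{A}$, transition probabilities $P(s'|s,a)$, cost $R:\mathcal{S}\times\mathcal{A}\to[0,1]$, discount $\gamma\in[0,1)$. Policies $\Pi=\Delta(\mathcal{A})^{|\mathcal{S}|}$; $\operatorname{rint}\Pi$ is the set of policies with all entries $\pi_{s,a}>0$. $V_s(\pi)=\mathbf{E}\bigl[\sum_{t\ge0}\gamma^tR(s_t,a_t)\mid s_0=s\bigr]$ with $a_t\sim\pi_{s_t}$, $s_{t+1}\sim P(\cdot|s_t,a_t)$; $V_\rho(\pi)=\sum_s\rho_sV_s(\pi)$. $Q_{s,a}(\pi)=R_{s,a}+\gamma\sum_{s'}P(s'|s,a)V_{s'}(\pi)$; $Q(\pi)\in\mathbf{R}^{|\mathcal{S}|\times|\mathcal{A}|}$, $Q_s(\pi)\in\mathbf{R}^{|\mathcal{A}|}$.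 Bregman divergence: $h:\mathbf{R}^{|\mathcal{A}|}\to\mathbf{R}\cup\{+\infty\}$ is a convex function of Legendre type (proper, closed, essentially smooth, strictly convex on the relative interior of its domain) with $\Delta(\mathcal{A})\subseteq\operatorname{dom}h$ and $\operatorname{rint}\Delta(\mathcal{A})\subseteq\operatorname{rint}\operatorname{dom}h$; $D(p,p')=h(p)-h(p')-\langle\nabla h(p'),p-p'\rangle$. Inexact policy mirror descent: at each iteration an estimate $\widehat Q(\pi^{(k)})\in\mathbf{R}^{|\mathcal{S}|\times|\mathcal{A}|}$ of $Q(\pi^{(k)})$ is available, and for each $s$, $\pi^{(k+1)}_s=\arg\min_{p\in\Delta(\mathcal{A})}\{\eta_k\langle\widehat Q_s(\pi^{(k)}),p\rangle+D(p,\pi^{(k)}_s)\}$. *)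

(* Defs.v *)
From HB Require Import structures.
From mathcomp Require Import all_boot all_order all_algebra.
From mathcomp Require Import all_classical all_reals all_analysis.
Set Implicit Arguments. Unset Strict Implicit. Unset Printing Implicit Defensive.
Import Order.TTheory GRing.Theory Num.Theory.
Import numFieldNormedType.Exports.
Local Open Scope classical_set_scope.
Local Open Scope ring_scope.

Section Defs.
Variable R : realType.

Definition simplex (n : nat) (p : 'rV[R]_n) : Prop :=
  (forall i, 0 <= p 0 i) /\ \sum_i p 0 i = 1.

Definition rint_simplex (n : nat) (p : 'rV[R]_n) : Prop :=
  (forall i, 0 < p 0 i) /\ \sum_i p 0 i = 1.

Definition dotr (n : nat) (q p : 'rV[R]_n) : R := \sum_i q 0 i * p 0 i.

Definition edom (n : nat) (h : 'rV[R]_n -> \bar R) : set 'rV[R]_n :=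
  [set x | (h x < +oo)%E].

Definition hfin (n : nat) (h : 'rV[R]_n -> \bar R) : 'rV[R]_n -> R :=
  fun x => fine (h x).

Definition grad (n : nat) (f : 'rV[R]_n -> R) (x : 'rV[R]_n) : 'rV[R]_n :=
  \row_(i < n) ('d f x (delta_mx 0 i : 'rV[R]_n)).

Definition proper_fun (n : nat) (h : 'rV[R]_n -> \bar R) : Prop :=
  (exists x, (h x < +oo)%E) /\ (forall x, (-oo < h x)%E).

Definition convex_fun (n : nat) (h : 'rV[R]_n -> \bar R) : Prop :=
  forall (x y : 'rV[R]_n) (t : R), 0 <= t <= 1 ->
    let z := t *: x + (1 - t) *: y in
    (h z <= t%:E * h x + (1 - t)%:E * h y)%E.

(** closed = lower semicontinuous = closed epigraph *)
Definition closed_fun (n : nat) (h : 'rV[R]_n -> \bar R) : Prop :=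
  closed [set xy : 'rV[R]_n * R | (h xy.1 <= xy.2%:E)%E].

Definition essentially_smooth (n : nat) (h : 'rV[R]_n -> \bar R) : Prop :=
  let C := edom h in
  (exists x, interior C x) /\
  (forall x, interior C x -> differentiable (hfin h) x) /\
  (forall (u : nat -> 'rV[R]_n) (x : 'rV[R]_n),
      (forall k, interior C (u k)) -> u @ \oo --> x ->
      closure (interior C) x -> ~ interior C x ->
      (fun k => `|grad (hfin h) (u k)|) @ \oo --> +oo).

Definition strictly_convex_on_int (n : nat) (h : 'rV[R]_n -> \bar R) : Prop :=
  forall (x y : 'rV[R]_n) (t : R), interior (edom h) x -> interior (edom h) y ->
    x != y -> 0 < t < 1 ->
    hfin h (t *: x + (1 - t) *: y) < t * hfin h x + (1 - t) * hfin h y.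

Definition legendre (n : nat) (h : 'rV[R]_n -> \bar R) : Prop :=
  [/\ proper_fun h, convex_fun h, closed_fun h, essentially_smooth h
    & strictly_convex_on_int h].

Definition bregman (n : nat) (h : 'rV[R]_n -> \bar R) (p p' : 'rV[R]_n) : R :=
  hfin h p - hfin h p' - 'd (hfin h) p' (p - p').

Definition is_policy (nS nA : nat) (pi : 'M[R]_(nS, nA)) : Prop :=
  forall s, simplex (row s pi).

Definition is_rint_policy (nS nA : nat) (pi : 'M[R]_(nS, nA)) : Prop :=
  forall s, rint_simplex (row s pi).

Definition is_transition (nS nA : nat) (P : 'I_nS -> 'I_nA -> 'I_nS -> R) : Prop :=
  forall s a, (forall s', 0 <= P s a s') /\ \sum_s' P s a s' = 1.

Section MDP.
Variables (nS nA : nat) (P : 'I_nS -> 'I_nA -> 'I_nS -> R)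
          (C : 'I_nS -> 'I_nA -> R) (gamma : R).

Definition Ppi (pi : 'M[R]_(nS, nA)) : 'M[R]_nS :=
  \matrix_(s, s') \sum_a pi s a * P s a s'.

Definition cpi (pi : 'M[R]_(nS, nA)) : 'cV[R]_nS :=
  \col_s \sum_a pi s a * C s a.

(** V_s(pi) = E[ sum_t gamma^t C(s_t,a_t) | s_0 = s ]
            = sum_{t>=0} gamma^t (P_pi^t c_pi)_s   (series) *)
Definition Vs (pi : 'M[R]_(nS, nA)) (s : 'I_nS) : R :=
  limn (fun N => \sum_(0 <= t < N) gamma ^+ t * ((Ppi pi ^+ t) *m cpi pi) s 0).

Definition Vrho (pi : 'M[R]_(nS, nA)) (rho : 'rV[R]_nS) : R :=
  \sum_s rho 0 s * Vs pi s.

Definition Qfun (pi : 'M[R]_(nS, nA)) : 'M[R]_(nS, nA) :=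
  \matrix_(s, a) (C s a + gamma * \sum_s' P s a s' * Vs pi s').

End MDP.
End Defs.

(* Main.v *)
Require Import Defs.
From HB Require Import structures.
From mathcomp Require Import all_boot all_order all_algebra.
From mathcomp Require Import all_classical all_reals all_analysis.
From mathcomp Require Import ring lra.
Import Order.TTheory GRing.Theory Num.Theory.
Import numFieldNormedType.Exports.
Local Open Scope classical_set_scope.
Local Open Scope ring_scope.
Section MDPpart.
Variables (R : realType) (nS nA : nat)
  (P : 'I_nS -> 'I_nA -> 'I_nS -> R) (C : 'I_nS -> 'I_nA -> R) (gamma : R).
Hypothesis HP : is_transition P.
Hypothesis HC : forall s a, 0 <= C s a <= 1.
Hypothesis Hg : 0 <= gamma < 1.

Lemma cvg_bigsum (I : Type) (r : seq I) (f : I -> nat -> R) (l : I -> R) :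
  (forall i, f i @ \oo --> l i) ->
  (fun n => \sum_(i <- r) f i n) @ \oo --> \sum_(i <- r) l i.
Proof.
move=> H; elim: r => [|a r IH].
  under eq_fun do rewrite big_nil; rewrite big_nil; exact: cvg_cst.
under eq_fun do rewrite big_cons; rewrite big_cons; exact: cvgD.
Qed.

Lemma piQ (pi : 'M[R]_(nS, nA)) (v : 'I_nS -> R) (q : 'M[R]_(nS, nA)) s :
  (forall a, q s a = C s a + gamma * \sum_s' P s a s' * v s') ->
  \sum_a pi s a * q s a = cpi C pi s 0 + gamma * \sum_s' Ppi P pi s s' * v s'.
Proof.
move=> Hq; under eq_bigr do rewrite Hq mulrDr.
rewrite big_split /= /cpi mxE; congr (_ + _).
have -> : \sum_s' Ppi P pi s s' * v s' = \sum_a pi s a * \sum_s' P s a s' * v s'.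
  rewrite /Ppi; under eq_bigr do rewrite mxE mulr_suml.
  rewrite exchange_big; apply: eq_bigr => a _; rewrite mulr_sumr.
  by apply: eq_bigr => s' _; rewrite mulrA.
by rewrite mulr_sumr; apply: eq_bigr => a _; rewrite mulrCA.
Qed.

Section pol.
Variable pi : 'M[R]_(nS, nA).
Hypothesis Hpi : is_policy pi.

Lemma pi_ge0 s a : 0 <= pi s a.
Proof. by have [H _] := Hpi s; have := H a; rewrite mxE. Qed.

Lemma pi_sum s : \sum_a pi s a = 1.
Proof. by have [_ H] := Hpi s; rewrite -H; apply: eq_bigr => a _; rewrite mxE. Qed.

Let M := Ppi P pi.
Let c := cpi C pi.

Lemma M_ge0 s s' : 0 <= M s s'.
Proof.
rewrite /M /Ppi mxE; apply: sumr_ge0 => a _; apply: mulr_ge0; first exact: pi_ge0.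
by have [H _] := HP s a; exact: H.
Qed.

Lemma M_sum s : \sum_s' M s s' = 1.
Proof.
rewrite /M /Ppi; under eq_bigr do rewrite mxE.
rewrite exchange_big /= -(pi_sum s); apply: eq_bigr => a _.
by rewrite -mulr_sumr; have [_ ->] := HP s a; rewrite mulr1.
Qed.

Lemma c_bnd s : 0 <= c s 0 <= 1.
Proof.
rewrite /c /cpi mxE; apply/andP; split.
  apply: sumr_ge0 => a _; apply: mulr_ge0; first exact: pi_ge0.
  by case/andP: (HC s a).
rewrite -(pi_sum s); apply: ler_sum => a _; rewrite -[X in _ <= X]mulr1.
by apply: ler_wpM2l; [exact: pi_ge0|case/andP: (HC s a)].
Qed.

Definition S N s := \sum_(0 <= t < N) gamma ^+ t * ((M ^+ t) *m c) s 0.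

Lemma u_rec t s : ((M ^+ t.+1) *m c) s 0 = \sum_s' M s s' * ((M ^+ t) *m c) s' 0.
Proof. by rewrite exprS -mulmxA mxE. Qed.

Lemma S_rec N s : S N.+1 s = c s 0 + gamma * \sum_s' M s s' * S N s'.
Proof.
rewrite /S big_nat_recl // expr0 mul1r mul1mx; congr (_ + _).
under eq_bigr do rewrite u_rec exprS mulr_sumr.
rewrite exchange_big /= mulr_sumr; apply: eq_bigr => s' _.
rewrite !mulr_sumr; apply: eq_bigr => t _; ring.
Qed.

Lemma S_bnd N s : 0 <= S N s <= (1 - gamma)^-1.
Proof.
case/andP: Hg => g0 g1.
have g1' : 0 < 1 - gamma by rewrite subr_gt0.
elim: N s => [|N IH] s.
  by rewrite /S big_geq // lexx /= invr_ge0 ltW.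
rewrite S_rec; case/andP: (c_bnd s) => c0 c1; apply/andP; split.
  apply: addr_ge0 => //; apply: mulr_ge0 => //; apply: sumr_ge0 => s' _.
  by apply: mulr_ge0; [exact: M_ge0|case/andP: (IH s')].
have : \sum_s' M s s' * S N s' <= (1 - gamma)^-1.
  apply: (@le_trans _ _ (\sum_s' M s s' * (1-gamma)^-1)).
    apply: ler_sum => s' _.
    by apply: ler_wpM2l; [exact: M_ge0|case/andP: (IH s')].
  by rewrite -mulr_suml M_sum mul1r.
move=> H.
have -> : (1 - gamma)^-1 = 1 + gamma * (1 - gamma)^-1.
  by field; rewrite subr_eq0; apply/eqP => e; rewrite e ltxx in g1.
by apply: lerD => //; apply: ler_wpM2l.
Qed.

Lemma u_ge0 t s : 0 <= ((M ^+ t) *m c) s 0.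
Proof.
elim: t s => [|t IH] s; first by rewrite expr0 mul1mx; case/andP: (c_bnd s).
rewrite u_rec; apply: sumr_ge0 => s' _; apply: mulr_ge0 => //; exact: M_ge0.
Qed.

Lemma S_cvg s : cvgn (S ^~ s).
Proof.
apply: nondecreasing_is_cvgn.
  apply/nondecreasing_seqP => N; rewrite /S big_nat_recr //= lerDl.
  apply: mulr_ge0; last exact: u_ge0.
  by case/andP: Hg => g0 _; exact: exprn_ge0.
by exists (1 - gamma)^-1 => _ [N _ <-]; case/andP: (S_bnd N s).
Qed.

Lemma VsE s : Vs P C gamma pi s = limn (S ^~ s).
Proof. by []. Qed.

Lemma bellman s :
  Vs P C gamma pi s = c s 0 + gamma * \sum_s' M s s' * Vs P C gamma pi s'.
Proof.
have H1 : (fun N => S N.+1 s) @ \oo --> Vs P C gamma pi s.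
  by rewrite VsE; have := S_cvg s; rewrite -(cvg_shiftS (S ^~ s)).
have H2 : (fun N => S N.+1 s) @ \oo -->
    c s 0 + gamma * \sum_s' M s s' * Vs P C gamma pi s'.
  under eq_fun do rewrite S_rec.
  apply: cvgD; first exact: cvg_cst.
  apply: cvgMr; apply: cvg_bigsum => s'; apply: cvgMr.
  by rewrite VsE; exact: S_cvg.
by rewrite -(cvg_lim _ H1) //; exact: cvg_lim H2.
Qed.

Lemma V_Q s : Vs P C gamma pi s = \sum_a pi s a * Qfun P C gamma pi s a.
Proof. by rewrite bellman (piQ pi (Vs P C gamma pi) (Qfun P C gamma pi)) // => a; rewrite mxE. Qed.

Lemma QV s : \sum_a pi s a * Qfun P C gamma pi s a = c s 0 + gamma * \sum_s' M s s' * Vs P C gamma pi s' .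
Proof. by rewrite -V_Q -bellman. Qed.

End pol.

Lemma perf_bound (pi pi' : 'M[R]_(nS, nA)) (B : R) :
  is_policy pi -> is_policy pi' ->
  (forall s, \sum_a pi' s a * Qfun P C gamma pi s a - Vs P C gamma pi s <= B) ->
  forall s, Vs P C gamma pi' s - Vs P C gamma pi s <= B / (1 - gamma).
Proof.
move=> Hpi Hpi' Hg' s.
case/andP: Hg => g0 g1.
have g1' : 0 < 1 - gamma by rewrite subr_gt0.
pose D s := Vs P C gamma pi' s - Vs P C gamma pi s.
have HD s1 : D s1 <= B + gamma * \sum_s' Ppi P pi' s1 s' * D s'.
  have := Hg' s1.
  rewrite (piQ pi' (Vs P C gamma pi) (Qfun P C gamma pi)); last by move=> a; rewrite mxE.
  rewrite /D (@bellman pi' Hpi' s1).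
  under [X in _ -> _ <= _ + gamma * X]eq_bigr do rewrite mulrBr.
  rewrite sumrB; lra.
pose s0 := [arg max_(i > s) D i]%O.
have Hs0 : forall s', D s' <= D s0.
  by move=> s'; rewrite /s0; case: (arg_maxP D (isT : predT s)) => i _ H; exact: H.
have : D s0 <= B + gamma * D s0.
  apply: (le_trans (HD s0)); rewrite lerD2l; apply: ler_wpM2l => //.
  apply: (@le_trans _ _ (\sum_s' Ppi P pi' s0 s' * D s0)).
    by apply: ler_sum => s' _; apply: ler_wpM2l; [exact: (@M_ge0 pi' Hpi')|exact: Hs0].
  by rewrite -mulr_suml (@M_sum pi' Hpi') mul1r.
move=> H; apply: (le_trans (Hs0 s)).
rewrite ler_pdivlMr //; nra.
Qed.

End MDPpart.

Section Convex.
Variables (R : realType) (n : nat) (h : 'rV[R]_n -> \bar R).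
Hypothesis Hproper : forall x, (-oo < h x)%E.
Hypothesis Hconv : convex_fun h.
Let f := hfin h.
Let D := edom h.

Lemma fin_h x : D x -> h x = (f x)%:E.
Proof.
rewrite /D /edom /= => Hx; rewrite /f /hfin fineK //.
by apply: fin_real; rewrite Hproper.
Qed.

Lemma conv_fin x y t : D x -> D y -> 0 <= t <= 1 ->
  D (t *: x + (1 - t) *: y) /\ f (t *: x + (1 - t) *: y) <= t * f x + (1 - t) * f y.
Proof.
move=> Dx Dy t01; have := @Hconv x y t t01; rewrite /= (fin_h x Dx) (fin_h y Dy).
rewrite -!EFinM -EFinD => H.
have Dz : D (t *: x + (1 - t) *: y).
  by rewrite /D /edom /=; apply: (le_lt_trans H); exact: ltry.
split => //; by rewrite -lee_fin -fin_h.
Qed.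

Lemma dn_right (A : set R) : (0:R)^' A -> (0:R)^'+ A.
Proof.
rewrite /dnbhs /within /=; apply: filterS => t Ht t0; apply: Ht; exact: lt0r_neq0.
Qed.

Lemma grad_ineq x w : differentiable f x -> D x -> D w ->
  'd f x (w - x) <= f w - f x.
Proof.
move=> dfx Dx Dw; set v := w - x.
have Hd : derivable f x v := diff_derivable dfx.
rewrite -deriveE //.
have Hc : (fun t : R => t^-1 *: ((f \o shift x) (t *: v) - f x)) @ 0^' --> 'D_v f x := Hd.
have Hc' : (fun t : R => t^-1 *: ((f \o shift x) (t *: v) - f x)) @ 0^'+ --> 'D_v f x.
  by move=> A HA; apply: dn_right; exact: Hc HA.
apply: (cvgr_to_le Hc'); near=> t.
have t0 : 0 < t by near: t; exact: nbhs_right_gt.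
have t1 : t <= 1 by near: t; exact: nbhs_right_ltW ltr01.
have Ht : t *: v + x = t *: w + (1 - t) *: x.
  by rewrite /v scalerBr scalerBl scale1r addrA addrAC.
have t01 : 0 <= t <= 1 by rewrite (ltW t0) t1.
have [_ Hf] := conv_fin w x t Dw Dx t01.
rewrite /= Ht.
change (t^-1 * (f (t *: w + (1 - t) *: x) - f x) <= f w - f x).
rewrite mulrC ler_pdivrMr //; nra.
Unshelve. all: by end_near. Qed.

Lemma int_seg x y t : D x -> interior D y -> 0 < t <= 1 ->
  interior D (t *: y + (1 - t) *: x).
Proof.
move=> Dx /nbhs_ballP [e e0 He] /andP [t0 t1].
apply/nbhs_ballP; exists (t * e); first exact: mulr_gt0.
move=> u; rewrite -ball_normE /= => Hu.
set z := t *: y + (1 - t) *: x in Hu *.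
pose y' := y + t^-1 *: (u - z).
have Dy' : D y'.
  apply: He; rewrite -ball_normE /= /y' opprD addrA subrr sub0r normrN normrZ.
  rewrite ger0_norm ?invr_ge0 ?(ltW t0) // -normrN opprB mulrC ltr_pdivrMr //.
  by rewrite mulrC.
have -> : u = t *: y' + (1 - t) *: x.
  rewrite /y' scalerDr scalerA mulfV ?gt_eqF // scale1r.
  by rewrite addrAC -/z addrC subrK.
have t01 : 0 <= t <= 1 by rewrite (ltW t0) t1.
by have [] := conv_fin y' x t Dy' Dx t01.
Qed.

Hypothesis Hdiff : forall x, interior D x -> differentiable f x.
Hypothesis Hblow : forall (u : nat -> 'rV[R]_n) (x : 'rV[R]_n),
      (forall k, interior D (u k)) -> u @ \oo --> x ->
      closure (interior D) x -> ~ interior D x ->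
      (fun k => `|grad f (u k)|) @ \oo --> +oo.

Lemma dlin (z : 'rV[R]_n) (a : R) (v1 v2 : 'rV[R]_n) :
  'd f z (v1 + a *: v2) = 'd f z v1 + a * 'd f z v2.
Proof. by rewrite linearD linearZ. Qed.

Lemma delta_norm (i : 'I_n) : `|delta_mx 0 i : 'rV[R]_n| <= 1.
Proof.
rewrite [leLHS]/Num.norm /= mx_normrE; apply: bigmax_le => // ij _.
by rewrite mxE; case: (_ && _); rewrite ?normr1 ?normr0.
Qed.

Lemma interior_min x y c : D x -> interior D y ->
  (forall t, 0 < t <= 1 -> f x <= f (t *: y + (1 - t) *: x) + t * c) ->
  interior D x.
Proof.
move=> Dx Iy Hmin; apply: contrapT => Nx.
have Dy : D y by apply: nbhs_singleton Iy.
have dfy := Hdiff _ Iy.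
have Hcont := differentiable_continuous dfy.
have : \forall w \near y, D w /\ f w < f y + 1.
  near=> w; split; first by near: w; exact: Iy.
  near: w; apply: (@cvgr_lt _ _ _ _ f (f y) Hcont); by rewrite ltrDl.
move=> Hn; have [r r0 Hr] := (nbhs_ballP _ _).1 Hn.
set M := f y + 1.
set a := 'd f y (y - x).
set m := f y - `|a|.
set K := M - m + `|c|.
have Hg : forall t, 0 < t <= 1 -> forall i,
    `|'d f (t *: y + (1 - t) *: x) (delta_mx 0 i)| <= 2 * `|K| / r.
  move=> t /andP [t0 t1] i.
  set z := t *: y + (1 - t) *: x.
  have Iz : interior D z by apply: int_seg => //; rewrite t0 t1.
  have Dz : D z by apply: nbhs_singleton Iz.
  have dfz := Hdiff _ Iz.
  have fz : m <= f z.
    have := grad_ineq _ _ dfy Dy Dz.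
    have -> : z - y = 0 + (t - 1) *: (y - x).
      by rewrite add0r /z; apply/matrixP => i0 j0; rewrite !mxE; ring.
    rewrite dlin linear0 add0r -/a => H.
    have : - `|a| <= (t - 1) * a.
      case: (lerP 0 a) => a0.
        rewrite ger0_norm //; nra.
      rewrite ltr0_norm //; nra.
    rewrite /m; lra.
  set d := 'd f z (y - x).
  have Hd : - c <= d.
    have := grad_ineq _ _ dfz Dz Dx.
    have -> : x - z = 0 + (- t) *: (y - x).
      by rewrite add0r /z; apply/matrixP => i0 j0; rewrite !mxE; ring.
    rewrite dlin linear0 add0r -/d => H.
    have := Hmin t (introT andP (conj t0 t1)); rewrite -/z => H2.
    have : t * (- c) <= t * d by nra.
    by rewrite ler_pM2l.
  have Hc : forall v, `|v| < r -> 'd f z v <= K.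
    move=> v vr.
    have Bw : ball y r (y + v) by rewrite -ball_normE /= opprD addrA subrr sub0r normrN.
    have [Dw fw] := Hr _ Bw.
    have := grad_ineq _ _ dfz Dz Dw.
    have -> : y + v - z = v + (1 - t) *: (y - x).
      by rewrite /z; apply/matrixP => i0 j0; rewrite !mxE; ring.
    rewrite dlin -/d => H.
    have : (1 - t) * (- c) <= (1 - t) * d.
      by apply: ler_wpM2l => //; rewrite subr_ge0.
    have : (1 - t) * c <= `|c|.
      case: (lerP 0 c) => c0.
        rewrite ger0_norm //; nra.
      rewrite ltr0_norm //; nra.
    rewrite /K /M; lra.
  have r2 : 0 < r / 2 by rewrite divr_gt0.
  have Hv : `|(r / 2) *: (delta_mx 0 i : 'rV[R]_n)| < r.
    rewrite normrZ gtr0_norm //; apply: (le_lt_trans (ler_wpM2l (ltW r2) (delta_norm i))).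
    rewrite mulr1; lra.
  have H1 := Hc _ Hv.
  have H2 : 'd f z (- ((r / 2) *: (delta_mx 0 i : 'rV[R]_n))) <= K.
    by apply: Hc; rewrite normrN.
  rewrite linearN /= in H2.
  have E : 'd f z ((r / 2) *: delta_mx 0 i) = (r / 2) * 'd f z (delta_mx 0 i) by rewrite linearZ.
  rewrite E in H1 H2.
  have HB : r / 2 * (2 * `|K| / r) = `|K| by field; rewrite gt_eqF.
  have HK : K <= `|K| by exact: ler_norm.
  move: H1 H2 HB HK r2; set g := 'd f z _; set B := 2 * `|K| / r; set r' := r / 2.
  move=> H1 H2 HB HK r2.
  rewrite ler_norml; apply/andP; split; nra.
have r2K : 0 <= 2 * `|K| / r by rewrite divr_ge0 ?mulr_ge0 // ltW.
have Hgrad : forall t, 0 < t <= 1 ->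
    `|grad f (t *: y + (1 - t) *: x)| <= 2 * `|K| / r.
  move=> t t01; rewrite [leLHS]/Num.norm /= mx_normrE.
  apply: bigmax_le => // ij _; rewrite mxE; exact: Hg.
pose u k := harmonic k *: y + (1 - harmonic k) *: x.
have ht k : 0 < (harmonic k : R) <= 1.
  rewrite /harmonic /= invr_gt0 ltr0n /= invf_le1 ?ltr0n //.
  by rewrite ler1n.
have Iu k : interior D (u k) by apply: int_seg => //; exact: ht.
have ucv : u @ \oo --> x.
  have -> : u = fun k => harmonic k *: (y - x) + x.
    apply/funext => k; rewrite /u; apply/matrixP => i0 j0; rewrite !mxE; ring.
  have := cvgD (@cvgZl _ _ _ _ _ _ _ (y - x) (@cvg_harmonic R)) (cvg_cst x).
  by rewrite scale0r add0r; move=> H; apply: H; exact: nat_filter_on_Filter. 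
have clx : closure (interior D) x.
  move=> B /ucv HB; have [k Hk] := @filter_ex _ \oo _ (u @^-1` B) HB.
  by exists (u k).
have := @Hblow u x Iu ucv clx Nx.
move/cvgryPge => /(_ (2 * `|K| / r + 1)) H.
have [k Hk] := filter_ex H.
have := Hgrad _ (ht k); rewrite -/(u k); lra.
Unshelve. all: by end_near. Qed.

End Convex.

Lemma sum_pos (R : realType) n (p : 'rV[R]_n) : \sum_i p 0 i = 1 -> (0 < n)%N.
Proof. by case: n p => [|n] p //; rewrite big_ord0 => /eqP; rewrite eq_sym oner_eq0. Qed.

Lemma dotr_comb (R : realType) n (q y x : 'rV[R]_n) (t : R) :
  dotr q (t *: y + (1 - t) *: x) = t * dotr q y + (1 - t) * dotr q x.
Proof.
by rewrite /dotr !mulr_sumr -big_split; apply: eq_bigr => i _ /=; rewrite !mxE; ring.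
Qed.

Lemma dotr_sub (R : realType) n (q y x : 'rV[R]_n) :
  dotr q (y - x) = dotr q y - dotr q x.
Proof.
by rewrite /dotr -sumrB; apply: eq_bigr => i _; rewrite !mxE; ring.
Qed.

Theorem lemma12 (R : realType) (nS nA : nat)
  (P : 'I_nS -> 'I_nA -> 'I_nS -> R) (C : 'I_nS -> 'I_nA -> R) (gamma : R)
  (h : 'rV[R]_nA -> \bar R)
  (pi : nat -> 'M[R]_(nS, nA)) (Qhat : nat -> 'M[R]_(nS, nA))
  (eta : nat -> R) (tau : R) :
  is_transition P ->
  (forall s a, 0 <= C s a <= 1) ->
  0 <= gamma < 1 ->
  legendre h ->
  (forall p : 'rV[R]_nA, simplex p -> edom h p) ->
  (forall p : 'rV[R]_nA, rint_simplex p -> interior (edom h) p) ->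
  is_rint_policy (pi 0%N) ->
  (forall k, 0 < eta k) ->
  (forall k s a, `|Qhat k s a - Qfun P C gamma (pi k) s a| <= tau) ->
  (forall k s,
     simplex (row s (pi k.+1)) /\
     (forall p : 'rV[R]_nA, simplex p ->
        eta k * dotr (row s (Qhat k)) (row s (pi k.+1))
          + bregman h (row s (pi k.+1)) (row s (pi k))
        <= eta k * dotr (row s (Qhat k)) p + bregman h p (row s (pi k)))) ->
  forall k,
    (forall s, dotr (row s (Qhat k)) (row s (pi k.+1) - row s (pi k)) <= 0) /\
    (forall rho : 'rV[R]_nS, simplex rho ->
       Vrho P C gamma (pi k.+1) rho - Vrho P C gamma (pi k) rho
         <= 2 / (1 - gamma) * tau).
Proof.
move=> HP HC Hg [[_ Hprop] Hconv _ Hsm _] Hsd Hri Hpi0 Heta HQ Hstep.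
case: Hsm => _ [Hdiff Hblow].
set f := hfin h.
set D := edom h.
have Inv : forall k s, simplex (row s (pi k)) /\ interior D (row s (pi k)).
  elim => [|k IH] s.
    have [H1 H2] := Hpi0 s; split; last exact: Hri.
    by split => // a; exact: ltW.
  have [Hsx Hopt] := Hstep k s.
  split => //.
  set x := row s (pi k.+1); set q := row s (pi k).
  have [[Hsq _] Iq] := IH s.
  have n0 : (0 < nA)%N by case: Hsx => _; exact: sum_pos.
  set y : 'rV[R]_nA := const_mx (nA%:R^-1).
  have Hy : rint_simplex y.
    split => [a|]; first by rewrite mxE invr_gt0 ltr0n.
    under eq_bigr do rewrite mxE.
    by rewrite sumr_const card_ord -[_ *+ nA]mulr_natl mulfV // pnatr_eq0 -lt0n.
  set Q := row s (Qhat k).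
  pose L p := eta k * dotr Q p - 'd f q (p - q).
  apply: (@interior_min _ _ h Hprop Hconv Hdiff Hblow x y (L y - L x)).
  - exact: Hsd.
  - exact: Hri.
  move=> t /andP [t0 t1].
  set p := t *: y + (1 - t) *: x.
  have Hsp : simplex p.
    case: Hy => Hy1 Hy2; case: Hsx => Hx1 Hx2; split => [a|].
      rewrite !mxE; apply: addr_ge0; apply: mulr_ge0.
      - exact: ltW.
      - by have := Hy1 a; rewrite mxE => /ltW.
      - by rewrite subr_ge0.
      - by have := Hx1 a; rewrite mxE.
    under eq_bigr do rewrite !mxE.
    rewrite big_split /= -!mulr_sumr.
    have Ey : \sum_(i < nA) (nA%:R^-1 : R) = 1.
      by rewrite -[RHS]Hy2; apply: eq_bigr => i _; rewrite /y mxE.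
    have Ex : \sum_(i < nA) pi k.+1 s i = 1.
      by rewrite -[RHS]Hx2; apply: eq_bigr => i _; rewrite mxE.
    by rewrite Ey Ex; ring.
  have E : 'd f q (p - q) = t * 'd f q (y - q) + (1 - t) * 'd f q (x - q).
    have -> : p - q = t *: (y - q) + (1 - t) *: (x - q).
      by rewrite /p; apply/matrixP => i0 j0; rewrite !mxE; ring.
    by rewrite linearD !linearZ.
  have := Hopt p Hsp; rewrite /bregman -/f -/x -/q -/Q E dotr_comb /L.
  nra.
move=> k.
have Part1 : forall s, dotr (row s (Qhat k)) (row s (pi k.+1) - row s (pi k)) <= 0.
  move=> s.
  have [Hsq Iq] := Inv k s.
  have [Hsx Hopt] := Hstep k s.
  have Dq : D (row s (pi k)) by apply: nbhs_singleton Iq.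
  have Dx : D (row s (pi k.+1)) by apply: Hsd.
  have G := @grad_ineq R nA h Hprop Hconv _ _ (Hdiff _ Iq) Dq Dx.
  have := Hopt _ Hsq; rewrite /bregman -/f (subrr (f _)) (subrr (row s (pi k))) linear0 dotr_sub.
  set a := dotr _ (row s (pi k.+1)); set b := dotr _ (row s (pi k)).
  move=> H; have e0 := Heta k.
  have : eta k * (a - b) <= 0.
  rewrite mulrBr; move: H G; rewrite -/f; lra.
  by rewrite pmulr_rle0.
split => // rho [rho0 rho1].
have Hpk : is_policy (pi k) by move=> s; exact: (Inv k s).1.
have Hpk1 : is_policy (pi k.+1) by move=> s; exact: (Inv k.+1 s).1.
have Hb : forall s, \sum_a pi k.+1 s a * Qfun P C gamma (pi k) s a
    - Vs P C gamma (pi k) s <= 2 * tau.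
  move=> s; rewrite (@V_Q _ _ _ _ _ _ HP HC Hg _ Hpk s) -sumrB.
  set Q := Qfun P C gamma (pi k).
  have -> : \sum_a (pi k.+1 s a * Q s a - pi k s a * Q s a) =
      dotr (row s (Qhat k)) (row s (pi k.+1) - row s (pi k)) +
      \sum_a (pi k.+1 s a - pi k s a) * (Q s a - Qhat k s a).
    by rewrite /dotr -big_split; apply: eq_bigr => a _ /=; rewrite !mxE; ring.
  have H1 := Part1 s.
  have H2 : \sum_a (pi k.+1 s a - pi k s a) * (Q s a - Qhat k s a)
      <= \sum_a (pi k.+1 s a + pi k s a) * tau.
    apply: ler_sum => a _.
    have p1 := @pi_ge0 _ _ _ _ Hpk1 s a; have p0 := @pi_ge0 _ _ _ _ Hpk s a.
    have hq := HQ k s a; rewrite distrC in hq.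
    apply: (le_trans (ler_norm _)); rewrite normrM; apply: ler_pM => //.
    apply: (le_trans (ler_normB _ _)).
    by rewrite (ger0_norm p1) (ger0_norm p0).
  move: H2; rewrite -mulr_suml big_split /= (@pi_sum _ _ _ _ Hpk1) (@pi_sum _ _ _ _ Hpk).
  lra.
have Hs := @perf_bound _ _ _ _ _ _ HP HC Hg _ _ _ Hpk Hpk1 Hb.
rewrite /Vrho -sumrB.
apply: (@le_trans _ _ (\sum_s rho 0 s * (2 * tau / (1 - gamma)))).
  apply: ler_sum => s _; rewrite -mulrBr; apply: ler_wpM2l => //; exact: Hs.
by rewrite -mulr_suml rho1 mul1r mulrAC.
Qed.
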